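(* Let $O_{(4,1)}(x,y,z,w)=x^4z^2w^2+y^4x^2w^2+z^4x^2y^2+w^4y^2z^2-4x^2y^2z^2w^2$, and let $F$ be a real form of degree $8$ in $x,y,z,w$ with $0\le F\le O_{(4,1)}$ pointwise on $\mathbb R^4$. Let $\gamma_{x,3}(y,z,w)$ be the coefficient of $x^3$ in $F$, viewed as a polynomial in $x$ with coefficients in $\mathbb R[y,z,w]$. Then $\gamma_{x,3}$ contains none of the monomials $y^3w^2,y^3zw,y^3z^2,y^2w^3,y^2z^2w,y^2z^3,yzw^3,z^3w^2,z^2w^3$; in fact there are $q_{11},q_{12},q_{13}\in\mathbb R$ with $$\gamma_{x,3}(y,z,w)=yzw\,(q_{11}z^2+q_{12}zw+q_{13}yw),$$ so that $\gamma_{x,3}$ has only the monomials $y^2zw^2$, $yz^3w$, $yz^2w^2$. *)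

(* Defs.v *)
From HB Require Import structures.
From mathcomp Require Import all_boot all_order all_algebra.
From mathcomp Require Import mpoly.
From mathcomp Require Import reals.
Set Implicit Arguments. Unset Strict Implicit. Unset Printing Implicit Defensive.
Import Order.TTheory GRing.Theory Num.Theory.
Local Open Scope ring_scope.

Definition ix : 'I_4 := @Ordinal 4 0 isT.
Definition iy : 'I_4 := @Ordinal 4 1 isT.
Definition iz : 'I_4 := @Ordinal 4 2 isT.
Definition iw : 'I_4 := @Ordinal 4 3 isT.

Definition vx {R : realType} : {mpoly R[4]} := 'X_ix.
Definition vy {R : realType} : {mpoly R[4]} := 'X_iy.
Definition vz {R : realType} : {mpoly R[4]} := 'X_iz.
Definition vw {R : realType} : {mpoly R[4]} := 'X_iw.

Definition O41 (R : realType) : {mpoly R[4]} :=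
  vx ^+ 4 * vz ^+ 2 * vw ^+ 2 + vy ^+ 4 * vx ^+ 2 * vw ^+ 2
  + vz ^+ 4 * vx ^+ 2 * vy ^+ 2 + vw ^+ 4 * vy ^+ 2 * vz ^+ 2
  - 4%:R * vx ^+ 2 * vy ^+ 2 * vz ^+ 2 * vw ^+ 2.

(* Main.v *)
Require Import Defs.
From HB Require Import structures.
From mathcomp Require Import all_boot all_order all_algebra.
From mathcomp Require Import mpoly.
From mathcomp Require Import reals.
From mathcomp Require Import ring lra zify.
Import Order.TTheory GRing.Theory Num.Theory.
Local Open Scope ring_scope.

Lemma small_zero (R : realType) (c M : R) :
  (forall t : R, 0 < t <= 1 -> `|c| <= t * M) -> c = 0.
Proof.
move=> H; apply/eqP; apply/negPn/negP => hc.
have hu : 0 < `|c| by rewrite normr_gt0.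
have hM : `|c| <= M by have := H 1; rewrite ltr01 lexx mul1r; apply.
set u := `|c| in hu hM H.
have hpos : 0 < u + M by lra.
have := H (u / (u + M)).
have ht : 0 < u / (u + M) <= 1.
  apply/andP; split; first by rewrite divr_gt0.
  by rewrite ler_pdivrMr // mul1r; lra.
move=> /(_ ht); rewrite mulrAC ler_pdivlMr // => h.
nra.
Qed.

Lemma poly_bdd (R : realType) (q : {poly R}) :
  exists B : R, forall t : R, 0 <= t <= 1 -> `|q.[t]| <= B.
Proof.
exists (\sum_(i < size q) `|q`_i|) => t /andP [t0 t1].
rewrite horner_coef; apply: le_trans (ler_norm_sum _ _ _) _.
apply: ler_sum => i _; rewrite normrM normrX (ger0_norm t0).
rewrite -[X in _ <= X]mulr1; apply: ler_wpM2l => //.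
exact: exprn_ile1.
Qed.

Lemma loword (R : realType) (K : nat) : forall (p : {poly R}) (C : R),
  (forall t : R, 0 < t <= 1 -> `|p.[t]| <= C * t ^+ K) ->
  forall j, (j < K)%N -> p`_j = 0.
Proof.
elim: K => [//|K IH] p C H j hj.
have [q [c Hp]] : exists q c, p = q * 'X + c%:P.
  by clear; elim/poly_ind: p => [|q c _]; [exists 0, 0; rewrite mul0r add0r | exists q, c].
subst p.
have [B hB] := @poly_bdd R q.
have c0 : c = 0.
  apply: (@small_zero R c (`|C| + B)) => t /andP [t0 t1].
  have := H t; rewrite t0 t1 => /(_ isT); rewrite hornerMXaddC => h1.
  have h2 := hB t; rewrite (ltW t0) t1 in h2; have {}h2 := h2 isT.
  have h3 : t ^+ K.+1 <= t.
    have e1 : t ^+ K <= 1 by apply: exprn_ile1 => //; apply: ltW.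
    by rewrite exprS -[X in _ <= X]mulr1; apply: ler_wpM2l => //; exact: ltW.
  have h4 : 0 <= t ^+ K.+1 by rewrite exprn_ge0 ?ltW.
  have h5 : C * t ^+ K.+1 <= `|C| * t.
    apply: le_trans (_ : `|C| * t ^+ K.+1 <= _).
      by apply: ler_wpM2r => //; exact: ler_norm.
    by apply: ler_wpM2l.
  have h6 : `|q.[t] * t| <= B * t by rewrite normrM (gtr0_norm t0); apply: ler_wpM2r => //; exact: ltW.
  have : `|c| <= `|q.[t] * t + c| + `|q.[t] * t|.
    by rewrite -[X in `|X|](addKr (q.[t] * t)) (le_trans (ler_normD _ _)) // addrC normrN.
  lra.
subst c; rewrite addr0 in H *.
have Hq : forall t : R, 0 < t <= 1 -> `|q.[t]| <= C * t ^+ K.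
  move=> t ht; have := H t ht; rewrite hornerMX normrM (gtr0_norm (proj1 (andP ht))).
  by rewrite exprSr mulrA ler_pM2r // (proj1 (andP ht)).
rewrite coefMX; case: j hj => [//|j] hj /=.
exact: (IH q C Hq).
Qed.

Lemma ord4P (P : 'I_4 -> Prop) : P ix -> P iy -> P iz -> P iw -> forall i, P i.
Proof.
move=> h0 h1 h2 h3 [[|[|[|[|k]]]] hk] //.
- by rewrite (_ : Ordinal hk = ix) //; apply: val_inj.
- by rewrite (_ : Ordinal hk = iy) //; apply: val_inj.
- by rewrite (_ : Ordinal hk = iz) //; apply: val_inj.
- by rewrite (_ : Ordinal hk = iw) //; apply: val_inj.
Qed.

Lemma prod4 (R : comNzRingType) (f : 'I_4 -> R) :
  \prod_(i < 4) f i = f ix * f iy * f iz * f iw.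
Proof.
rewrite !big_ord_recl big_ord0 mulr1 !mulrA.
by congr (_ * _ * _ * _); congr f; apply: val_inj.
Qed.

Lemma mdeg4 (m : 'X_{1..4}) : mdeg m = (m ix + m iy + m iz + m iw)%N.
Proof.
rewrite mdegE !big_ord_recl big_ord0 addn0 !addnA.
by congr (_ + _ + _ + _)%N; congr (m _); apply: val_inj.
Qed.

Definition wt (a b c d : nat) (m : 'X_{1..4}) :=
  (a * m ix + b * m iy + c * m iz + d * m iw)%N.

Lemma O41E (R : realType) (v : 'I_4 -> R) : (O41 R).@[v] =
  v ix ^+ 4 * v iz ^+ 2 * v iw ^+ 2 + v iy ^+ 4 * v ix ^+ 2 * v iw ^+ 2
  + v iz ^+ 4 * v ix ^+ 2 * v iy ^+ 2 + v iw ^+ 4 * v iy ^+ 2 * v iz ^+ 2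
  - 4%:R * v ix ^+ 2 * v iy ^+ 2 * v iz ^+ 2 * v iw ^+ 2.
Proof.
rewrite /O41 /vx/vy/vz/vw !(mevalB, mevalD, mevalM, mevalXU, meval1).
ring.
Qed.

Lemma key (R : realType) (F : {mpoly R[4]}) (a b c d K : nat) (m0 : 'X_{1..4}) :
  F \is 8.-homog ->
  (forall v : 'I_4 -> R, 0 <= F.@[v] /\ F.@[v] <= (O41 R).@[v]) ->
  (K <= 4*a + 2*c + 2*d)%N -> (K <= 2*a + 4*b + 2*d)%N ->
  (K <= 2*a + 2*b + 4*c)%N -> (K <= 2*b + 2*c + 4*d)%N ->
  (wt a b c d m0 < K)%N ->
  (forall m : 'X_{1..4}, mdeg m = 8%N -> wt a b c d m = wt a b c d m0 -> m = m0) ->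
  F@_m0 = 0.
Proof.
move=> hF hb h1 h2 h3 h4 hw huniq.
pose e (i : 'I_4) := nth 0%N [:: a; b; c; d] i.
pose v (t : R) := fun i => t ^+ e i.
pose p : {poly R} := \sum_(m <- msupp F) F@_m *: 'X^(wt a b c d m).
have hev : forall t, F.@[v t] = p.[t].
  move=> t; rewrite mevalE /p horner_sum; apply: eq_bigr => m _.
  by rewrite hornerZ hornerXn prod4 /v /e /= -!exprM /wt !exprD.
have hO : forall t, 0 < t <= 1 -> (O41 R).@[v t] <= 4%:R * t ^+ K.
  move=> t /andP[t0 t1].
  rewrite O41E.
  rewrite (_ : v t ix = t ^+ a) // (_ : v t iy = t ^+ b) // (_ : v t iz = t ^+ c) //.
  rewrite (_ : v t iw = t ^+ d) //.
  rewrite -!exprM -!exprD.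


  have hK : forall N, (K <= N)%N -> t ^+ N <= t ^+ K.
    by move=> N hN; apply: ler_wiXn2l => //; exact: ltW.
  have g1 := hK (a * 4 + c * 2 + d * 2)%N ltac:(lia).
  have g2 := hK (b * 4 + a * 2 + d * 2)%N ltac:(lia).
  have g3 := hK (c * 4 + a * 2 + b * 2)%N ltac:(lia).
  have g4 := hK (d * 4 + b * 2 + c * 2)%N ltac:(lia).
  have t0' : 0 <= t by exact: ltW.
  have g5 : 0 <= 4%:R * t ^+ (a * 2) * t ^+ (b * 2) * t ^+ (c * 2) * t ^+ (d * 2).
    by rewrite !mulr_ge0 // exprn_ge0.
  lra.
have hp : forall t, 0 < t <= 1 -> `|p.[t]| <= 4%:R * t ^+ K.
  move=> t ht; rewrite -hev; have [h0 hle] := hb (v t).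
  by rewrite ger0_norm //; exact: le_trans hle (hO t ht).
have := @loword R K p _ hp _ hw.
rewrite /p coef_sum.
under eq_bigr do rewrite coefZ coefXn.
case: (boolP (m0 \in msupp F)) => hin; last by move=> _; apply: memN_msupp_eq0.
rewrite (bigD1_seq m0 hin (msupp_uniq F)) /= eqxx mulr1 big1_seq ?addr0 //.
move=> m /andP[hne hm]; case: eqP => [hw'|]; last by rewrite mulr0.
by move/eqP: hne; case; apply: huniq => //; exact: dhomog_mf hF _ hm.
Qed.

Definition mk (p q r s : nat) : 'X_{1..4} := [multinom nth 0%N [:: p; q; r; s] i | i < 4].

Ltac solve_key hF hb a b c d K :=
  apply: (@key _ _ a b c d K _ hF hb); rewrite /wt /mk ?mnmE /=; try lia;
  let m := fresh "m" in let hd := fresh "hd" in let hw := fresh "hw" in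
  move=> m; rewrite mdeg4 => hd hw; apply/mnmP; apply: ord4P;
  rewrite mnmE /=; lia.

Theorem lemma1 (R : realType) (F : {mpoly R[4]}) :
  F \is 8.-homog ->
  (forall v : 'I_4 -> R, 0 <= F.@[v] /\ F.@[v] <= (O41 R).@[v]) ->
  exists q11 q12 q13 : R,
    forall m : 'X_{1..4}, m ix = 3%N ->
      F@_m = (if (m iy, m iz, m iw) == (1, 3, 1)%N then q11
              else if (m iy, m iz, m iw) == (1, 2, 2)%N then q12
              else if (m iy, m iz, m iw) == (2, 1, 2)%N then q13
              else 0).
Proof.
move=> hF hb.
exists (F@_(mk 3 1 3 1)), (F@_(mk 3 1 2 2)), (F@_(mk 3 2 1 2)) => m hx.
have [hs|hs] := boolP (m iy + m iz + m iw == 5)%N; last first.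
  have -> : F@_m = 0.
    apply: (dhomog_nemf_coeff hF); change (mdeg m != 8%N).
    by rewrite mdeg4 hx; apply/eqP; lia.
  move: (m iy) (m iz) (m iw) hs => b c d hs.
  do 3 (case: eqP => [[h1 h2 h3]|_]; first by rewrite h1 h2 h3 in hs).
  done.
have hm : m = mk 3 (m iy) (m iz) (m iw).
  by apply/mnmP; apply: ord4P; rewrite mnmE.
rewrite {1}hm; move: (m iy) (m iz) (m iw) hs; clear hm hx m.
case=> [|[|[|[|[|[|b]]]]]]; case=> [|[|[|[|[|[|c]]]]]]; case=> [|[|[|[|[|[|d]]]]]] // _ /=;
  try first [ done
  | solve_key hF hb 6%N 8%N 11%N 0%N 38%N
  | solve_key hF hb 0%N 2%N 11%N 12%N 32%N
  | solve_key hF hb 5%N 12%N 0%N 8%N 34%N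
  | solve_key hF hb 0%N 3%N 8%N 15%N 38%N
  | solve_key hF hb 0%N 3%N 12%N 4%N 20%N
  | solve_key hF hb 0%N 4%N 3%N 12%N 20%N
  | solve_key hF hb 0%N 4%N 12%N 3%N 22%N
  | solve_key hF hb 3%N 12%N 4%N 0%N 20%N ].
Qed.
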